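(* Let $G$ be a finite simple graph which is either a tree or a unicyclic graph (a connected graph with exactly one cycle) whose cycle has odd length, and let $\mathcal{N}G$ be its normal graph algebra over a field $\mathbb{F}$ of characteristic not $2$. Then $G$ is edge-square: for every edge $\mathfrak{e}$ of $G$ there exists $u\in U_G$ with $u^2=\mathfrak{e}$.
   Context: For a finite simple graph $G$ with vertex set $VG$ and edge set $EG$ (edge with endpoints $x,y$ written $[x,y]$), the normal graph algebra $\mathcal{N}G$ is the $\mathbb{F}$-vector space $U_G\oplus\mathfrak{Z}_G$, where $U_G$ has basis $VG$ and $\mathfrak{Z}_G$ has basis $EG$, with commutative bilinear product determined by: for distinct vertices $x,y$, $xy=[x,y]$ if adjacent and $0$ otherwise; $x^2=\sum_{y\sim x}[x,y]$; all products involving an element of $\mathfrak{Z}_G$ are $0$. Equivalently, for $u=\sum_x\theta_x x$, $u^2=\sum_{[x,y]\in EG}(\theta_x+\theta_y)^2[x,y]$. *)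

(* Defs.v *)
From mathcomp Require Import all_boot all_order all_algebra.
Set Implicit Arguments. Unset Strict Implicit. Unset Printing Implicit Defensive.
Import GRing.Theory.
Local Open Scope ring_scope.

(* A finite simple graph: vertex type V (a finType), adjacency e : rel V,
   assumed symmetric and irreflexive. An edge [x,y] is the 2-set {x,y}. *)
Section Graph.
Variables (V : finType) (e : rel V).

Definition edge_set : {set {set V}} := [set E : {set V} | [exists x : V, exists y : V, e x y && (E == [set x; y])]].

Definition connected_graph : Prop := forall x y : V, connect e x y.

Definition is_graph_cycle (p : seq V) : bool := [&& (2 < size p)%N, uniq p & cycle e p].

(* the edges of a cycle (identifies rotations / reversals of the same cycle) *)
Definition cycle_edges (p : seq V) : {set {set V}} := [set [set x; next p x] | x in p].

Definition is_tree : Prop := connected_graph /\ forall p, ~~ is_graph_cycle p.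

Definition is_odd_unicyclic : Prop :=
  connected_graph /\
  exists p, [/\ is_graph_cycle p, odd (size p) &
              forall q, is_graph_cycle q -> cycle_edges q = cycle_edges p].

Variable F : fieldType.

(* Elements of U_G: coefficient vectors theta : V -> F (u = sum_x theta_x x).
   Elements of Z_G: coefficient functions on 2-sets, supported on edge_set.
   Square in NG: u^2 = sum_{[x,y] in EG} (theta_x + theta_y)^2 [x,y]. *)
Definition NG_square (theta : V -> F) : {ffun {set V} -> F} :=
  [ffun E => if E \in edge_set then (\sum_(v in E) theta v) ^+ 2 else 0].

Definition edge_elt (E0 : {set V}) : {ffun {set V} -> F} :=
  [ffun E => if E == E0 then 1 else 0].

Definition edge_square : Prop :=
  forall E0, E0 \in edge_set -> exists theta : V -> F, NG_square theta = edge_elt E0.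

End Graph.

(* Main.v *)
Require Import Defs.
From mathcomp Require Import all_boot all_order all_algebra.
From mathcomp Require Import zify ring.
Set Implicit Arguments. Unset Strict Implicit. Unset Printing Implicit Defensive.
Import GRing.Theory.
Local Open Scope ring_scope.

Lemma path_homo (T1 T2 : Type) (r1 : rel T1) (r2 : rel T2) (h : T1 -> T2) :
  (forall u w, r1 u w -> r2 (h u) (h w)) ->
  forall u p, path r1 u p -> path r2 (h u) (map h p).
Proof.
move=> H u p; elim: p u => //= v p IH u /andP [ruv pp].
by apply/andP; split; [exact: H | exact: IH].
Qed.

Lemma conn_homo (T1 T2 : finType) (r1 : rel T1) (r2 : rel T2) (h : T1 -> T2) :
  (forall u w, r1 u w -> r2 (h u) (h w)) ->
  forall u w, connect r1 u w -> connect r2 (h u) (h w).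
Proof.
move=> H u w /connectP [p pp ->]; apply/connectP.
exists (map h p); last by rewrite last_map.
exact: (path_homo H pp).
Qed.

Lemma odd_cycle_extract (T : eqType) (r : rel T) n : forall s : seq T,
  (size s <= n)%N -> cycle r s -> odd (size s) ->
  exists c, [/\ cycle r c, uniq c, odd (size c) & {subset c <= s}].
Proof.
elim: n => [|n IH] s.
  by rewrite leqn0 => /eqP/size0nil ->.
move=> Hs cs os.
case: (boolP (uniq s)) => [us|nus]; first by exists s; split.
have [x0 _] : exists x0 : T, True by case: s os {Hs cs nus} => // x0; exists x0.
case/(uniqPn x0): nus => i [j [ij js eqij]].
have is_ : (i < size s)%N by apply: ltn_trans ij js.
have Erot : rot i s = nth x0 s i :: (drop i.+1 s ++ take i s).
  by rewrite /rot (drop_nth x0 is_).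
have yin : nth x0 s i \in drop i.+1 s.
  rewrite eqij.
  have -> : nth x0 s j = nth x0 (drop i.+1 s) (j - i.+1) by rewrite nth_drop subnKC.
  apply: mem_nth; rewrite size_drop; lia.
have : nth x0 s i \in drop i.+1 s ++ take i s by rewrite mem_cat yin.
move: Erot; move: (drop i.+1 s ++ take i s) (nth x0 s i) => p y Erot yp.
case/splitPr: yp Erot => t1 t2 Erot.
have := cs; rewrite -(rot_cycle i) Erot /= rcons_cat rcons_cons cat_path /=.
case/and3P => p1 l1 p2.
have sz : size s = (size t1 + size t2).+2.
  by rewrite -(size_rot i) Erot /= size_cat /= addnS.
have sub1 : {subset y :: t1 <= s}.
  move=> z zin; rewrite -(mem_rot i) Erot; move: zin; rewrite !inE mem_cat.
  by case/orP=> [->|->]; rewrite ?orbT.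
have sub2 : {subset y :: t2 <= s}.
  move=> z zin; rewrite -(mem_rot i) Erot; move: zin; rewrite !inE mem_cat !inE.
  by case/orP=> ->; rewrite ?orbT.
case Ho: (odd (size t1).+1).
  have [c [c1 c2 c3 c4]] : exists c, [/\ cycle r c, uniq c, odd (size c) & {subset c <= y :: t1}].
    apply: IH => //=; first by move: Hs; rewrite sz; lia.
    by rewrite rcons_path p1 l1.
  by exists c; split => // z /c4 /sub1.
have [c [c1 c2 c3 c4]] : exists c, [/\ cycle r c, uniq c, odd (size c) & {subset c <= y :: t2}].
  apply: IH => //=; first by move: Hs; rewrite sz; lia.
  by move: os Ho; rewrite sz /= oddD; case: (odd (size t1)); case: (odd (size t2)).
by exists c; split => // z /c4 /sub2.
Qed.

Lemma small_nat_inj (F : fieldType) (m n : nat) : (2%:R : F) != 0 ->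
  (m <= 2)%N -> (n <= 2)%N -> (m%:R : F) = n%:R -> m = n.
Proof.
move=> two.
wlog mn : m n / (m <= n)%N.
  move=> H hm hn E; case: (leqP m n) => [mn|nm]; first exact: H.
  by apply/esym; apply: H => //; apply: ltnW.
move=> hm hn E.
case: (ltnP m n) => [lt|]; last by move=> nm; apply/eqP; rewrite eqn_leq mn nm.
have : ((n - m)%:R : F) = 0 by rewrite natrB ?E ?subrr // ltnW.
have : (n - m = 1 \/ n - m = 2)%N by lia.
case=> ->; first by move/eqP; rewrite oner_eq0.
by move/eqP; rewrite (negbTE two).
Qed.

Lemma bool_sum (F : fieldType) (x1 x2 x3 x4 : bool) : (2%:R : F) != 0 ->
  ((x1%:R - x2%:R) + (x3%:R - x4%:R) : F) = 0 -> (x1 + x3 = x2 + x4)%N.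
Proof.
move=> two E; apply: (small_nat_inj two).
- by clear E; case: x1; case: x3.
- by clear E; case: x2; case: x4.
rewrite !natrD; apply/eqP; rewrite -subr_eq0 -E; apply/eqP; ring.
Qed.

Section Main.
Variables (V : finType) (e : rel V).
Hypotheses (esym : symmetric e) (eirr : irreflexive e).
Variables (a b : V).
Hypothesis eab : e a b.

Definition Eab := [set a; b].
Definition e' : rel V := fun x y => e x y && ([set x; y] != Eab).

Lemma e'sym : symmetric e'.
Proof. by move=> x y; rewrite /e' esym setUC. Qed.

Lemma e'e x y : e' x y -> e x y.
Proof. by case/andP. Qed.

Lemma e_neq x y : e x y -> x != y.
Proof. by move=> exy; apply/eqP => xy; rewrite xy eirr in exy. Qed.

Lemma not_e' x y : e x y -> ~~ e' x y ->
  ((x == a) && (y == b)) || ((x == b) && (y == a)).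
Proof.
move=> exy; rewrite /e' exy /= negbK => /eqP H.
have hx : x \in Eab by rewrite -H !inE eqxx.
have hy : y \in Eab by rewrite -H !inE eqxx orbT.
have nxy := e_neq exy.
move: hx hy nxy; rewrite /Eab !inE.
case/orP => /eqP -> ; case/orP => /eqP -> ; rewrite ?eqxx /= ?orbT // ; by [] || (move=> h; exfalso; exact: (negP h)) || (move=> h; exfalso; exact: (negP h (erefl _))).
Qed.

Definition D : rel (V * bool) := fun u w => e' u.1 w.1 && (w.2 == ~~ u.2).

Lemma Dsym : symmetric D.
Proof. by move=> [x c] [y d]; rewrite /D /= e'sym; case: c; case: d. Qed.

Notation cn := (connect D).

Lemma cn_sym u w : cn u w = cn w u.
Proof. exact: (sym_connect_sym Dsym). Qed.

Lemma cn_flip x c y d : cn (x, c) (y, d) -> cn (x, ~~ c) (y, ~~ d).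
Proof.
move=> H.
have step : forall u w, D u w -> D ((fun u : V * bool => (u.1, ~~ u.2)) u) ((fun u : V * bool => (u.1, ~~ u.2)) w).
  by move=> [u1 u2] [w1 w2]; rewrite /D /= => /andP [-> /eqP ->]; rewrite negbK eqxx.
exact: (conn_homo step H).
Qed.

Lemma cn_proj u w : cn u w -> connect e' u.1 w.1.
Proof.
have step : forall u w, D u w -> e' (fst u) (fst w) by move=> ? ? /andP [].
exact: (conn_homo step).
Qed.

Lemma cn_lift x y : connect e' x y -> forall c, exists d, cn (x, c) (y, d).
Proof.
case/connectP => p pp ->; elim: p x pp => [|z p IH] x /=.
  by move=> _ c; exists c; exact: connect0.
case/andP => exz pp c; have [d Hd] := IH z pp (~~ c).
exists d; apply: connect_trans Hd; apply: connect1.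
by rewrite /D /= exz eqxx.
Qed.

Lemma cnD s x y c : e' x y -> cn s (y, c) = cn s (x, ~~ c).
Proof.
move=> exy; apply/idP/idP => H; apply: (connect_trans H); apply: connect1.
  by rewrite /D /= e'sym exy eqxx.
by rewrite /D /= exy negbK eqxx.
Qed.

Lemma parity u p : path D u p -> (last u p).2 = u.2 (+) odd (size p).
Proof.
elim: p u => [|w p IH] u /=; first by rewrite addbF.
case/andP => /andP [_ /eqP w2] pp; rewrite IH // w2.
by case: u.2; case: (odd (size p)).
Qed.

Lemma odd_walk x c : cn (x, c) (x, ~~ c) ->
  exists s, [/\ cycle e' s, odd (size s) & {subset s <= connect e' x}].
Proof.
case/connectP => p pp lp.
have op : odd (size p).
  have := parity pp; rewrite -lp /=.
  have gen : forall c' o : bool, ~~ c' = c' (+) o -> o by case; case.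
  exact: gen.
have pq := path_homo (r2 := e') (h := fst) (fun u w (H : D u w) => proj1 (andP H)) pp.
have lq : last x (map fst p) = x by rewrite (last_map fst p (x, c)) -lp.
have sq : size (map fst p) = size p by rewrite size_map.
move: (map fst p) pq lq sq => q pq lq sq.
case/lastP: q pq lq sq => [|t z] pq lq sq.
  by rewrite -sq in op.
rewrite last_rcons in lq; subst z.
exists (x :: t); split => //=.
- have : odd (size (rcons t x)) by rewrite sq.
  by rewrite size_rcons.
- move=> v vin; apply: (path_connect pq).
  by move: vin; rewrite !inE mem_rcons !inE; case/orP => ->; rewrite ?orbT.
Qed.

Lemma graph_cycle_of c : cycle e' c -> uniq c -> odd (size c) -> is_graph_cycle e c.
Proof.
move=> ce uc oc; rewrite /is_graph_cycle uc (sub_cycle (@e'e) ce) andbT.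
case: c ce uc oc => [|x [|y [|z c]]] //=.
by rewrite /e' eirr.
Qed.

Lemma Eab_notin c : cycle e' c -> Eab \notin cycle_edges c.
Proof.
move=> ce; apply/imsetP => [[x xc Ex]].
by have := next_cycle ce xc; rewrite /e' -Ex eqxx andbF.
Qed.

Lemma cycle_e'_ex x c : cn (x, c) (x, ~~ c) ->
  exists C, [/\ is_graph_cycle e C, cycle e' C & {subset C <= connect e' x}].
Proof.
case/odd_walk => s [cs os ss].
have [C [c1 c2 c3 c4]] := odd_cycle_extract (leqnn (size s)) cs os.
exists C; split => //; first exact: graph_cycle_of.
by move=> v /c4 /ss.
Qed.

Lemma cycle_ab : connect e' a b ->
  exists C, is_graph_cycle e C /\ Eab \in cycle_edges C.
Proof.
rewrite (sym_connect_sym e'sym) => /connectP [p pp lp].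
case: (shortenP pp) lp => p' pp' up' _ lp'.
case/lastP: p' pp' up' lp' => [|t z] pp' up' lp' /=.
  by move: (e_neq eab); rewrite lp' eqxx.
rewrite last_rcons in lp'; subst z.
case: t pp' up' => [|y t] pp' up'.
  by move: pp' => /=; rewrite /e' setUC eqxx !andbF.
exists [:: a, b, y & t]; split.
  rewrite /is_graph_cycle /=.
  have ua : uniq [:: a, b, y & t] by move: up'; rewrite -rcons_cons rcons_uniq.
  move: ua => /= ->; rewrite eab /=.
  move: pp' => /= /andP [h1 h2]; rewrite (e'e h1) /=.
  exact: (sub_path (@e'e) h2).
apply/imsetP; exists a; first by rewrite inE eqxx.
by rewrite /= eqxx.
Qed.

Lemma color_contra (P : seq V) : connected_graph e -> connect e' a b ->
  ~~ cn (a, true) (a, false) -> ~~ cn (a, true) (b, true) ->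
  is_graph_cycle e P -> odd (size P) -> False.
Proof.
move=> conn K np nq gP oP.
have Ksym : connect e' b a by rewrite (sym_connect_sym e'sym).
have allc : forall v, connect e' a v.
  move=> v; apply: (connect_sub _ (conn a v)) => x y exy.
  case: (boolP (e' x y)) => h; first exact: connect1.
  by case/orP: (not_e' exy h) => /andP [/eqP -> /eqP ->].
pose col v := cn (a, true) (v, true).
have both : forall v, ~~ (col v && cn (a, true) (v, false)).
  move=> v; apply/negP => /andP [h1 h2]; apply: (negP np).
  apply: (connect_trans h1); rewrite cn_sym.
  exact: (cn_flip h2).
have colF : forall v, cn (a, true) (v, false) = ~~ col v.
  move=> v; have [d Hd] := cn_lift (allc v) true.
  have := both v; rewrite /col.
  by case: d Hd => ->; rewrite ?andbT ?andTb => /negbTE ->.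
have colE : forall x y, e x y -> col y = ~~ col x.
  move=> x y exy; case: (boolP (e' x y)) => h.
    by rewrite /col (cnD _ _ h) colF.
  have ca : col a by exact: connect0.
  have cb : col b = false by apply/negbTE.
  by case/orP: (not_e' exy h) => /andP [/eqP -> /eqP ->]; rewrite ca cb.
have par : forall x s, path e x s -> col (last x s) = col x (+) odd (size s).
  move=> x s; elim: s x => [|z s IH] x /=; first by rewrite addbF.
  case/andP => exz ps; rewrite IH // (colE _ _ exz).
  by case: (col x); case: (odd (size s)).
case/and3P: gP => sP _ cP.
case: P sP cP oP => [//|x t] _ /= cP oP.
have := par _ _ cP; rewrite last_rcons size_rcons /=.
by move: oP; rewrite /=; case: (col x); case: (odd (size t)).
Qed.

Definition gval (F : fieldType) s v : F :=
  (cn (s, true) (v, true))%:R - (cn (s, true) (v, false))%:R.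

Lemma gval_anti (F : fieldType) s x y : e' x y -> gval F s x + gval F s y = 0.
Proof. by move=> h; rewrite /gval (cnD _ _ h) (cnD _ _ h) /=; ring. Qed.

Lemma key (F : fieldType) : (2%:R : F) != 0 -> is_tree e \/ is_odd_unicyclic e ->
  exists theta : V -> F, theta a + theta b = 1 /\ forall x y, e' x y -> theta x + theta y = 0.
Proof.
move=> two H.
suff [s Hs] : exists s, gval F s a + gval F s b != 0.
  exists (fun v => gval F s v / (gval F s a + gval F s b)); split.
    by rewrite -mulrDl mulfV.
  by move=> x y h; rewrite /= -mulrDl (gval_anti F s h) mul0r.
case: (eqVneq (gval F a a + gval F a b) 0) => [Sa|]; last by exists a.
case: (eqVneq (gval F b a + gval F b b) 0) => [Sb|]; last by exists b.
exfalso.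
have Sa' := bool_sum two Sa; have Sb' := bool_sum two Sb.
rewrite connect0 in Sa'; rewrite connect0 in Sb'.
have cs' : connect_sym e' := sym_connect_sym e'sym.
case: (boolP (connect e' a b)) => K.
  have [C1 [gC1 inC1]] := cycle_ab K.
  case: H => [[_ nc]|[conn [P [gP oP uP]]]]; first by move: (nc C1); rewrite gC1.
  case: (boolP (cn (a, true) (a, false))) => p.
    have [C2 [gC2 cC2 _]] := cycle_e'_ex p.
    by move/negP: (Eab_notin cC2); apply; rewrite (uP _ gC2) -(uP _ gC1).
  apply: (color_contra conn K p _ gP oP).
  move: Sa'; rewrite (negbTE p).
  by case: (cn (a, true) (b, true)); case: (cn (a, true) (b, false)).
have nq : forall c, cn (a, true) (b, c) = false.
  by move=> c; apply/negbTE; apply: contra K => /cn_proj.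
have nq' : forall c, cn (b, true) (a, c) = false.
  by move=> c; apply/negbTE; apply: contra K => /cn_proj /=; rewrite cs'.
rewrite !nq in Sa'; rewrite !nq' in Sb'.
have pa : cn (a, true) (a, false) by move: Sa'; case: (cn (a, true) (a, false)).
have pb : cn (b, true) (b, false) by move: Sb'; case: (cn (b, true) (b, false)).
have [Ca [gCa cCa sCa]] := cycle_e'_ex pa.
have [Cb [gCb cCb sCb]] := cycle_e'_ex pb.
case: H => [[_ nc]|[conn [P [gP oP uP]]]]; first by move: (nc Ca); rewrite gCa.
have EE : cycle_edges Ca = cycle_edges Cb by rewrite (uP _ gCa) (uP _ gCb).
case: Ca gCa EE sCa cCa => [|x ta] gCa EE sCa cCa; first by case/and3P: gCa.
have : [set x; next (x :: ta) x] \in cycle_edges (x :: ta).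
  by apply: imset_f; rewrite inE eqxx.
rewrite EE => /imsetP [y yin Ey].
have xCb : x \in Cb.
  have : x \in [set y; next Cb y] by rewrite -Ey !inE eqxx.
  by rewrite !inE => /orP [/eqP ->|/eqP ->] //; rewrite mem_next.
move/negP: K; apply.
apply: (connect_trans (sCa x _)); first by rewrite inE eqxx.
by rewrite cs'; apply: sCb.
Qed.
End Main.

Theorem proposition6p2 (F : fieldType) (V : finType) (e : rel V) :
  symmetric e -> irreflexive e -> (2%:R : F) != 0 ->
  is_tree e \/ is_odd_unicyclic e ->
  edge_square e F.
Proof.
move=> esym eirr two H E0.
rewrite inE => /existsP [a /existsP [b /andP [eab /eqP E0E]]].
have [th [thab thz]] := key esym eirr eab two H.
exists th; apply/ffunP => E; rewrite !ffunE.
have abin : [set a; b] \in edge_set e.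
  by rewrite inE; apply/existsP; exists a; apply/existsP; exists b; rewrite eab eqxx.
have nab : a != b by apply: (e_neq eirr eab).
have sum2 : forall x y, x != y -> \sum_(v in [set x; y]) th v = th x + th y.
  by move=> x y nxy; rewrite big_setU1 ?big_set1 //=; rewrite inE.
case: (boolP (E \in edge_set e)) => HE.
  case: (eqVneq E E0) => [->|nE].
    by rewrite E0E sum2 // thab expr1n.
  move: HE; rewrite inE => /existsP [x /existsP [y /andP [exy /eqP EE]]].
  have h : e' e a b x y by rewrite /e' exy /Eab -EE -E0E nE.
  by rewrite EE sum2 ?(e_neq eirr exy) // thz // expr0n.
case: eqP => // EE; move: HE; rewrite EE E0E abin.
by [].
Qed.
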